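(* Let $t\ge 2$, $k\ge 1$, and let $a_1,\dots,a_t\in\mathbb{F}_2[x]$ be polynomials each coprime with $x^k-1$. Let $C$ be the binary linear $[tk,k]$ code (a $1$-generator quasi-cyclic code of co-index $k$ with generating row $(a_1,\dots,a_t)$) generated by the rows of the $k\times tk$ matrix $(\mathrm{Circ}(a_1)\mid\mathrm{Circ}(a_2)\mid\cdots\mid\mathrm{Circ}(a_t))$. Then $C$ is a $t$-CIS code.
   Context: For $a\in\mathbb{F}_2[x]$, write $a\bmod (x^k-1)=\sum_{i=0}^{k-1}\alpha_ix^i$; $\mathrm{Circ}(a)$ is the $k\times k$ circulant matrix over $\mathbb{F}_2$ whose first row is $(\alpha_0,\dots,\alpha_{k-1})$ and each subsequent row is the cyclic right shift of the previous one. A binary linear $[tk,k]$ code is $t$-CIS if its coordinate set can be partitioned into $t$ pairwise disjoint information sets, an information set being a set of $k$ coordinates whose columns in a generator matrix are linearly independent. *)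

(* Defs.v *)
From mathcomp Require Import all_boot all_order all_algebra.
Set Implicit Arguments. Unset Strict Implicit. Unset Printing Implicit Defensive.
Import GRing.Theory.
Local Open Scope ring_scope.

Definition Circ (k : nat) (a : {poly 'F_2}) : 'M['F_2]_k :=
  \matrix_(i < k, j < k) (a %% ('X^k - 1))`_((j + k - i) %% k)%N.

Definition qc_genmx (k t : nat) (a : 'I_t -> {poly 'F_2}) :=
  \mxrow_(b < t) Circ k (a b).

Definition info_set (k n : nat) (G : 'M['F_2]_(k, n)) (S : {set 'I_n}) : bool :=
  (#|S| == k) && (\rank (colsub (fun j : 'I_#|S| => enum_val j) G) == #|S|).

Definition is_CIS (t k n : nat) (G : 'M['F_2]_(k, n)) : Prop :=
  exists P : 'I_t -> {set 'I_n},
    [/\ forall i j : 'I_t, i != j -> [disjoint P i & P j],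
        \bigcup_(i < t) P i = [set: 'I_n] &
        forall i : 'I_t, info_set G (P i)].

(* Main.v *)
Require Import Defs.
From mathcomp Require Import all_boot all_order all_algebra.
Set Implicit Arguments. Unset Strict Implicit. Unset Printing Implicit Defensive.
Import GRing.Theory.
Local Open Scope ring_scope.

Section Circ.
Variable k' : nat.
Local Notation k := k'.+1.

Definition Sh : 'M['F_2]_k := \matrix_(i, j) ((j == ((i + 1) %% k)%N :> nat)%:R).

Lemma ShX m : Sh ^+ m = \matrix_(i, j) ((j == ((i + m) %% k)%N :> nat)%:R).
Proof.
elim: m => [|m IH].
  apply/matrixP => i j; rewrite expr0 !mxE addn0 modn_small //.
  by rewrite eq_sym.
apply/matrixP => i j; rewrite exprSr IH -mulmxE !mxE.
have lt : ((i + m) %% k < k)%N by rewrite ltn_pmod.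
rewrite (bigD1 (Ordinal lt)) //= big1 ?addr0.
  rewrite !mxE eqxx mul1r modnDml.
  by rewrite addn1 addnS.
move=> l /eqP; rewrite !mxE => ne.
have -> : (l == ((i + m) %% k)%N :> nat) = false.
  by apply/negbTE/eqP => h; apply: ne; apply: val_inj.
by rewrite mul0r.
Qed.

Lemma ShXk : Sh ^+ k = 1.
Proof.
apply/matrixP => i j; rewrite ShX !mxE modnDr modn_small //.
by rewrite eq_sym.
Qed.

Lemma Circ_horner p : Circ k p = horner_mx Sh p.
Proof.
set q := ('X^k - 1 : {poly 'F_2}).
have hq : horner_mx Sh q = 0.
  by rewrite /q rmorphB rmorphXn /= horner_mx_X rmorph1 ShXk subrr.
have -> : horner_mx Sh p = horner_mx Sh (p %% q).
  by rewrite {1}(divp_eq p q) rmorphD rmorphM /= hq mulr0 add0r.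
set r := p %% q.
have sr : (size r <= k)%N.
  have : (size r < size q)%N.
    by rewrite ltn_modp /q -size_poly_eq0 size_XnsubC.
  by rewrite /q size_XnsubC.
have -> : r = \poly_(m < k) r`_m.
  apply/polyP => m; rewrite coef_poly; case: ltnP => // h.
  by rewrite nth_default // (leq_trans sr h).
rewrite poly_def rmorph_sum /=.
apply/matrixP => i j; rewrite /Circ mxE summxE.
have lt : ((j + k - i) %% k < k)%N by rewrite ltn_pmod.
rewrite (bigD1 (Ordinal lt)) //= big1 ?addr0.
  rewrite linearZ /= rmorphXn /= horner_mx_X ShX !mxE.
  have -> : (j == ((i + (j + k - i) %% k) %% k)%N :> nat).
    rewrite modnDmr addnBA ?(leq_trans (ltnW (ltn_ord i))) ?leq_addl //.
    by rewrite addKn modnDr modn_small.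
  by rewrite mulr1.
move=> m /eqP ne.
rewrite linearZ /= rmorphXn /= horner_mx_X ShX !mxE.
have -> : (j == ((i + m) %% k)%N :> nat) = false.
  apply/negbTE/eqP => h; apply: ne; apply: val_inj => /=.
  rewrite h; apply/eqP; rewrite -{1}(modn_small (ltn_ord m)) -(eqn_modDr i) subnK.
    by rewrite modnDr modn_mod addnC.
  exact: ltnW (leq_trans (ltn_ord i) (leq_addl _ _)).
by rewrite mulr0.
Qed.
Lemma hornerXk : horner_mx Sh ('X^k - 1) = 0.
Proof. by rewrite rmorphB rmorphXn /= horner_mx_X rmorph1 ShXk subrr. Qed.
End Circ.

Lemma Circ_unit k a : (0 < k)%N -> coprimep a ('X^k - 1) -> Circ k a \in unitmx.
Proof.
case: k => [//|k'] _ /Bezout_coprimepP [[u v] /=].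
rewrite -size_poly_eq1 => /size_poly1P [c c0 hc].
have h : horner_mx (Sh k') u *m Circ k'.+1 a = c%:M.
  have := congr1 (horner_mx (Sh k')) hc.
  rewrite rmorphD !rmorphM /= hornerXk mulr0 addr0 horner_mx_C.
  by rewrite Circ_horner mulmxE.
have h2 : (c^-1 *: horner_mx (Sh k') u) *m Circ k'.+1 a = 1%:M.
  by rewrite -scalemxAl h scale_scalar_mx mulVf.
exact: (proj2 (mulmx1_unit h2)).
Qed.

Lemma rank_colsub_inj k m (C : 'M['F_2]_k) (s : 'I_m -> 'I_k) :
  C \in unitmx -> injective s -> \rank (colsub s C) = m.
Proof.
move=> Cu inj.
have -> : colsub s C = C *m colsub s 1%:M by rewrite mulmx_colsub mulmx1.
rewrite -mxrank_tr trmx_mul mxrankMfree ?row_free_unit ?unitmx_tr // mxrank_tr.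
apply/eqP; rewrite eqn_leq rank_leq_col /=.
have e : (colsub s (1%:M : 'M['F_2]_k))^T *m colsub s (1%:M : 'M['F_2]_k) = 1%:M :> 'M['F_2]_m.
  apply/matrixP => i j; rewrite !mxE (bigD1 (s i)) //= big1 ?addr0.
    by rewrite !mxE eqxx mul1r (inj_eq inj).
  by move=> l nl; rewrite !mxE (negbTE nl) mul0r.
by rewrite -{1}(mxrank1 'F_2 m) -e mxrankM_maxr.
Qed.

Theorem proposition4 (t k : nat) (a : 'I_t -> {poly 'F_2}) :
  (2 <= t)%N -> (1 <= k)%N ->
  (forall i : 'I_t, coprimep (a i) ('X^k - 1)) ->
  is_CIS t (qc_genmx k a).
Proof.
move=> t2 k1 cop.
pose P b := [set s : 'I_(\sum_(b < t) k) | @tagnat.sig1 t (fun _ => k) s == b].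
exists P; split.
- move=> i j ne; rewrite -setI_eq0; apply/eqP/setP => s.
  rewrite !inE; apply/andP => -[/eqP e1 /eqP e2].
  by move: ne; rewrite -e1 -e2 eqxx.
- apply/setP => s; rewrite inE; apply/bigcupP.
  by exists (@tagnat.sig1 t (fun _ => k) s) => //; rewrite inE.
- move=> b.
  have hP : P b = [set @tagnat.Rank t (fun _ => k) b j | j : 'I_k].
    apply/setP => s; rewrite inE; apply/eqP/imsetP => [e | [j _ ->]].
      exists (@tagnat.sig2 t (fun _ => k) s) => //.
      by move: e => <-; rewrite tagnat.sig2K.
    by rewrite tagnat.Rank1K.
  have hS : #|P b| = k.
    rewrite hP card_imset ?card_ord //.
    move=> x y /(congr1 (@tagnat.sig2 t (fun _ => k))); rewrite !tagnat.Rank2K.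
    by move/(congr1 val) => /= /val_inj.
  apply/andP; split; first by rewrite hS.
  pose f := fun j : 'I_#|P b| => enum_val j.
  pose sg := fun j : 'I_#|P b| => (@tagnat.sig2 t (fun _ => k) (f j) : 'I_k).
  have -> : colsub (fun j : 'I_#|P b| => enum_val j) (qc_genmx k a)
            = colsub sg (Circ k (a b)).
    apply/matrixP => i j; rewrite !mxE.
    have : f j \in P b by exact: enum_valP.
    by rewrite inE => /eqP e; rewrite /sg e.
  rewrite rank_colsub_inj //; first exact: Circ_unit.
  move=> x y e.
  apply: enum_val_inj.
  have ex : f x \in P b by exact: enum_valP.
  have ey : f y \in P b by exact: enum_valP.
  rewrite !inE in ex ey.
  rewrite -[enum_val x](tagnat.sig2K (p_ := fun _ => k)) -[enum_val y](tagnat.sig2K (p_ := fun _ => k)).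
  move: ex ey e; rewrite /sg /f => /eqP -> /eqP -> /= ->.
  by [].
Qed.
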